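(* Let $\mathcal S$ be a trajectory set. The following are equivalent: (1) $\bar\sigma(0)\ge 0$. (2) (LOP) holds, the hedging price functional $I$ is positive (i.e. $I(f)\ge0$ for every $f\in\mathcal E^+$), and $I(f)\le\bar I(f^+)$ for every $f\in\mathcal E$. Moreover, if one (and then both) of these conditions holds, then $\bar\sigma(f)=I(f)$ for every $f\in\mathcal E$ and $\bar I(f)=I(f)$ for every $f\in\mathcal E^+$.
   Context: Fix $s_0\in\mathbb R$. A trajectory set is any set $\mathcal S$ of real sequences $S=(S_j)_{j\in\mathbb N_0}$ with $S_0=s_0$. A simple portfolio $(V,n,H)$ consists of $V\in\mathbb R$, $n\in\mathbb N$ and functions $H_i:\mathcal S\to\mathbb R$, $0\le i\le n-1$, which are nonanticipating, i.e. $H_i(S)=h_i(S_0,\dots,S_i)$ for some (not necessarily measurable) $h_i:\mathbb R^{i+1}\to\mathbb R$. Its wealth process is $\Pi^{V,n,H}_j(S)=V+\sum_{i=0}^{\min\{j,n\}-1}H_i(S)(S_{i+1}-S_i)$, $j\in\mathbb N_0$, and $\Pi^{V,n,H}_\infty:=\Pi^{V,n,H}_n$. It is positive if $V\ge0$ and $\Pi^{V,n,H}_\infty\ge0$ on $\mathcal S$. A generalized portfolio is a sequence $(V_m,n_m,H_m)_{m\in\mathbb N_0}$ of simple portfolios with $(V_m,n_m,H_m)$ positive for every $m\ge1$; it is a positive generalized portfolio if moreover $\Pi^{V_0,n_0,H_0}_j\equiv0$ for all $j$. A financial position $f:\mathcal S\to[-\infty,+\infty]$ is superhedged by a generalized portfolio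 with initial endowment $V\in(-\infty,+\infty]$ if $f\le\sum_{m=0}^\infty\Pi^{V_m,n_m,H_m}_\infty$ pointwise on $\mathcal S$ and $V=\sum_{m=0}^\infty V_m$. For $f:\mathcal S\to[0,+\infty]$, $\bar I(f)$ is the infimum of all $V\in[0,+\infty]$ such that $f$ is superhedged by a positive generalized portfolio with initial endowment $V$; for any financial position $f$, $\bar\sigma(f)$ is the infimum of all $V\in(-\infty,+\infty]$ such that $f$ is superhedged by a generalized portfolio with initial endowment $V$. Let $\mathcal E=\{\Pi^{V,n,H}_\infty:(V,n,H)\text{ simple portfolio}\}$ and $\mathcal E^+=\{f\in\mathcal E: f\ge0 \text{ on }\mathcal S\}$. (LOP) is the condition: whenever two simple portfolios $(V_0,n_0,H_0)$, $(V_1,n_1,H_1)$ satisfy $\Pi^{V_1,n_1,H_1}_\infty(S)=\Pi^{V_0,n_0,H_0}_\infty(S)$ for all $S\in\mathcal S$, then $V_1=V_0$. Under (LOP), the hedging price functional $I:\mathcal E\to\mathbb R$, $I(\Pi^{V,n,H}_\infty)=V$, is well defined and linear. $f^+,f^-$ denote positive and negative parts. *)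

(* Defs.v *)
From HB Require Import structures.
From mathcomp Require Import all_boot all_order all_algebra.
From mathcomp Require Import all_classical all_reals all_analysis.
Set Implicit Arguments. Unset Strict Implicit. Unset Printing Implicit Defensive.
Import Order.TTheory GRing.Theory Num.Theory.
Local Open Scope classical_set_scope.
Local Open Scope ring_scope.

Section Defs.
Variable R : realType.

Definition trajectory_set (s0 : R) (T : set (nat -> R)) : Prop :=
  forall S, T S -> S 0%N = s0.

Record portfolio := Portfolio {
  pV : R;
  pn : nat;
  pH : nat -> (nat -> R) -> R }.

(* (V,n,H) is a simple portfolio on T: n in N = {1,2,...} and each H_i
   (i <= n-1) is nonanticipating on T, i.e. H_i(S) only depends on S_0..S_i
   (equivalently H_i(S) = h_i(S_0,...,S_i) for some function h_i). *)
Definition simple_portfolio (T : set (nat -> R)) (P : portfolio) : Prop :=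
  (0 < pn P)%N /\
  forall i, (i < pn P)%N -> forall S S', T S -> T S' ->
    (forall k, (k <= i)%N -> S k = S' k) -> pH P i S = pH P i S'.

Definition wealth (P : portfolio) (j : nat) (S : nat -> R) : R :=
  pV P + \sum_(0 <= i < minn j (pn P)) pH P i S * (S i.+1 - S i).

Definition wealth_inf (P : portfolio) (S : nat -> R) : R := wealth P (pn P) S.

Definition positive_portfolio (T : set (nat -> R)) (P : portfolio) : Prop :=
  0 <= pV P /\ forall S, T S -> 0 <= wealth_inf P S.

Definition generalized_portfolio (T : set (nat -> R)) (Ps : nat -> portfolio) : Prop :=
  (forall m, simple_portfolio T (Ps m)) /\
  (forall m, (1 <= m)%N -> positive_portfolio T (Ps m)).

Definition positive_generalized_portfolio (T : set (nat -> R))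
    (Ps : nat -> portfolio) : Prop :=
  generalized_portfolio T Ps /\
  (forall j S, T S -> wealth (Ps 0%N) j S = 0).

Definition superhedges (T : set (nat -> R)) (Ps : nat -> portfolio)
    (f : (nat -> R) -> \bar R) (V : \bar R) : Prop :=
  (forall S, T S -> (f S <= \sum_(0 <= m <oo) (wealth_inf (Ps m) S)%:E)%E) /\
  V = (\sum_(0 <= m <oo) (pV (Ps m))%:E)%E.

Definition Ibar (T : set (nat -> R)) (f : (nat -> R) -> \bar R) : \bar R :=
  ereal_inf [set V | exists Ps, positive_generalized_portfolio T Ps /\
                                superhedges T Ps f V].

Definition sigmabar (T : set (nat -> R)) (f : (nat -> R) -> \bar R) : \bar R :=
  ereal_inf [set V | exists Ps, generalized_portfolio T Ps /\
                                superhedges T Ps f V].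

Definition replicates (T : set (nat -> R)) (P : portfolio) (f : (nat -> R) -> R) : Prop :=
  forall S, T S -> f S = wealth_inf P S.

Definition in_E (T : set (nat -> R)) (f : (nat -> R) -> R) : Prop :=
  exists P, simple_portfolio T P /\ replicates T P f.

Definition in_Eplus (T : set (nat -> R)) (f : (nat -> R) -> R) : Prop :=
  in_E T f /\ forall S, T S -> 0 <= f S.

Definition LOP (T : set (nat -> R)) : Prop :=
  forall P0 P1, simple_portfolio T P0 -> simple_portfolio T P1 ->
    (forall S, T S -> wealth_inf P1 S = wealth_inf P0 S) -> pV P1 = pV P0.

(* Hedging price functional I(f) = V for f = Pi_inf^{V,n,H} (a chosen
   representative; well defined under (LOP)). *)
Definition hedging_price (T : set (nat -> R)) (f : (nat -> R) -> R) : R :=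
  xget 0 [set v : R | exists P, simple_portfolio T P /\ replicates T P f /\ pV P = v].

End Defs.

(* Main.v *)
Require Import Defs.
From HB Require Import structures.
From mathcomp Require Import all_boot all_order all_algebra.
From mathcomp Require Import all_classical all_reals all_analysis.
From mathcomp Require Import lra.
Import Order.TTheory GRing.Theory Num.Theory.
Local Open Scope classical_set_scope.
Local Open Scope ring_scope.

Lemma eseries_head (R : realType) (u : nat -> \bar R) : u 0%N \is a fin_num ->
  (forall m, (0 <= u m.+1)%E) ->
  (\sum_(0 <= m <oo) u m = u 0%N + \sum_(0 <= m <oo) u m.+1)%E.
Proof.
move=> u0 uge0.
have cv : cvgn (fun n => (\sum_(0 <= i < n) u i.+1)%E).
  by apply: is_cvg_ereal_nneg_natsum => n _; exact: uge0.
apply: cvg_lim => //.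
rewrite -cvg_shiftS /=.
have -> : (fun n => (\sum_(0 <= i < n.+1) u i)%E) =
          (fun n => u 0%N + \sum_(0 <= i < n) u i.+1)%E.
  by apply/funext => n; rewrite big_nat_recl.
apply: cvgeD; first exact: fin_num_adde_defr.
  exact: cvg_cst.
exact: cv.
Qed.

Lemma addEFin (R : realType) (a b : R) : (a%:E + b%:E)%E = (a + b)%:E.
Proof. by []. Qed.

Section Aux.
Variable R : realType.

Definition zeroP : portfolio R := Portfolio 0 1 (fun _ _ => 0).

Lemma wealth_zeroP j S : wealth zeroP j S = 0.
Proof. by rewrite /wealth /= big1 ?addr0 // => i _; rewrite mul0r. Qed.

Lemma wealth_inf_zeroP S : wealth_inf zeroP S = 0.
Proof. exact: wealth_zeroP. Qed.

Lemma simple_zeroP T : simple_portfolio T zeroP.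
Proof. by split. Qed.

Lemma positive_zeroP T : positive_portfolio T zeroP.
Proof. by split => // S _; rewrite wealth_inf_zeroP. Qed.

Definition subP (A B : portfolio R) : portfolio R :=
  Portfolio (pV A - pV B) (maxn (pn A) (pn B))
    (fun i S => (if (i < pn A)%N then pH A i S else 0) -
                (if (i < pn B)%N then pH B i S else 0)).

Lemma sum_trunc (a N : nat) (x d : nat -> R) : (a <= N)%N ->
  \sum_(0 <= i < N) (if (i < a)%N then x i else 0) * d i =
  \sum_(0 <= i < a) x i * d i.
Proof.
move=> aN; rewrite (big_cat_nat (leq0n a) aN) /=.
rewrite [X in _ + X]big_nat_cond [X in _ + X]big1 ?addr0.
  by apply: eq_big_nat => i /andP[_ ->].
by move=> i /andP[/andP[ai _] _]; rewrite ltnNge ai mul0r.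
Qed.

Lemma wealth_inf_subP A B S :
  wealth_inf (subP A B) S = wealth_inf A S - wealth_inf B S.
Proof.
rewrite /wealth_inf /wealth /= !minnn.
under eq_bigr do rewrite mulrBl.
rewrite sumrB !sum_trunc ?leq_maxl ?leq_maxr //.
by rewrite opprD addrACA.
Qed.

Lemma simple_subP T A B : simple_portfolio T A -> simple_portfolio T B ->
  simple_portfolio T (subP A B).
Proof.
move=> [A0 HA] [B0 HB]; split; first by rewrite /= (leq_trans A0) ?leq_maxl.
move=> i _ S S' TS TS' eqS /=.
case: ifP => iA; case: ifP => iB //; rewrite ?(HA i iA S S') ?(HB i iB S S') //.
Qed.

Definition consP (A : portfolio R) (Ps : nat -> portfolio R) : nat -> portfolio R :=
  fun m => match m with 0%N => A | k.+1 => Ps k.+1 end.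

Definition oneP A := consP A (fun _ => zeroP).

Lemma gen_consP T A Ps : simple_portfolio T A -> generalized_portfolio T Ps ->
  generalized_portfolio T (consP A Ps).
Proof.
move=> sA [sPs pPs]; split; first by case => [|k] //=; apply: sPs.
by case => // k _; apply: pPs.
Qed.

Lemma gen_oneP T A : simple_portfolio T A -> generalized_portfolio T (oneP A).
Proof.
move=> sA; split; first by case => // k; exact: simple_zeroP.
by case => // k _; exact: positive_zeroP.
Qed.

Lemma sum_oneP (F : portfolio R -> R) A : F zeroP = 0 ->
  (\sum_(0 <= m <oo) (F (oneP A m))%:E = (F A)%:E)%E.
Proof.
move=> F0; rewrite eseries_head //=; last by move=> m; rewrite F0.
by rewrite eseries0 ?adde0 // => i _ _; rewrite F0.
Qed.

Lemma sh_oneP T A : superhedges T (oneP A) (fun S => (wealth_inf A S)%:E) (pV A)%:E.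
Proof.
split; last by rewrite (sum_oneP (@pV R)).
by move=> S _; rewrite (sum_oneP (fun P => wealth_inf P S)) ?wealth_inf_zeroP.
Qed.

Lemma gen_pV_ge0 (T : set (nat -> R)) Ps : generalized_portfolio T Ps -> forall m, (0 <= (pV (Ps m.+1))%:E)%E.
Proof. by move=> [_ pPs] m; rewrite lee_fin; case: (pPs m.+1 isT). Qed.

Lemma gen_w_ge0 (T : set (nat -> R)) Ps S : generalized_portfolio T Ps -> T S ->
  forall m, (0 <= (wealth_inf (Ps m.+1) S)%:E)%E.
Proof. by move=> [_ pPs] TS m; rewrite lee_fin; case: (pPs m.+1 isT) => _; apply. Qed.

Lemma price_le (T : set (nat -> R)) Ps (g : (nat -> R) -> \bar R) V P' f :
  (0 <= sigmabar T (fun _ => 0))%E -> simple_portfolio T P' -> replicates T P' f ->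
  generalized_portfolio T Ps -> superhedges T Ps g V ->
  (forall S, T S -> ((f S)%:E <= g S)%E) -> ((pV P')%:E <= V)%E.
Proof.
move=> s0 sP' rP' gPs [sh ->] hf.
have gPs' : generalized_portfolio T (consP (subP (Ps 0%N) P') Ps).
  by apply: gen_consP => //; apply: simple_subP => //; case: gPs.
set Y := (\sum_(0 <= m <oo) (pV (Ps m.+1))%:E)%E.
have Yge0 : (0 <= Y)%E by apply: nneseries_ge0 => n _ _; exact: gen_pV_ge0 gPs n.
have : (sigmabar T (fun _ => 0) <= (pV (Ps 0%N) - pV P')%:E + Y)%E.
  apply: ereal_inf_lbound; exists (consP (subP (Ps 0%N) P') Ps); split => //.
  split; last first.
    by rewrite eseries_head //; exact: gen_pV_ge0 gPs'.
  move=> S TS; rewrite eseries_head //=; last exact: gen_w_ge0 gPs' TS.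
  rewrite wealth_inf_subP -(rP' S TS).
  have := sh S TS; rewrite eseries_head //; last exact: gen_w_ge0 gPs TS.
  have := hf S TS.
  have : (0 <= \sum_(0 <= m <oo) (wealth_inf (Ps m.+1) S)%:E)%E.
    by apply: nneseries_ge0 => n _ _; exact: gen_w_ge0 gPs TS n.
  case: (\sum_(0 <= m <oo) _)%E => [r| |] //.
  case: (g S) => [x| |] //.
  by rewrite !addEFin !lee_fin; lra.
move=> /(le_trans s0).
rewrite eseries_head //; last exact: gen_pV_ge0 gPs.
move: Yge0; rewrite -/Y.
case: Y => [r| |] //.
by rewrite !addEFin !lee_fin; lra.
by move=> _ _; rewrite addey // leey.
Qed.

End Aux.
Arguments zeroP {R}.
Arguments subP {R}.
Arguments consP {R}.
Arguments oneP {R}.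
Arguments price_le {R T Ps g V P' f}.
Arguments gen_oneP {R T A}.
Arguments gen_consP {R T A Ps}.
Arguments gen_pV_ge0 {R T Ps}.
Arguments gen_w_ge0 {R T Ps S}.
Arguments simple_subP {R T A B}.
Arguments sh_oneP {R} T A.
Arguments sum_oneP {R} F A.
Arguments simple_zeroP {R} T.
Arguments positive_zeroP {R} T.


Lemma hp_spec (R : realType) (T : set (nat -> R)) f : in_E T f ->
  exists P, [/\ simple_portfolio T P, replicates T P f & pV P = hedging_price T f].
Proof.
move=> [P [sP rP]].
have : exists v, [set v : R | exists P, simple_portfolio T P /\ replicates T P f /\ pV P = v] v.
  by exists (pV P), P.
move=> /(xgetPex 0) [P' [sP' [rP' eP']]].
by exists P'; split.
Qed.

Lemma hp_LOP (R : realType) (T : set (nat -> R)) f P : LOP T ->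
  simple_portfolio T P -> replicates T P f -> hedging_price T f = pV P.
Proof.
move=> hL sP rP; have [P' [sP' rP' <-]] := @hp_spec R T f (ex_intro _ P (conj sP rP)).
by apply: hL => // S TS; rewrite -rP -?rP'.
Qed.

Lemma rep_self (R : realType) (T : set (nat -> R)) P : replicates T P (wealth_inf P).
Proof. by []. Qed.

Arguments rep_self {R} T P.
Arguments hp_spec {R T f}.
Arguments hp_LOP {R T f P}.

Theorem proposition3p3 (R : realType) (s0 : R) (T : set (nat -> R))
  (HT : trajectory_set s0 T) :
  let cond1 := (0 <= sigmabar T (fun _ => 0%E))%E in
  let cond2 :=
    [/\ LOP T,
        (forall f, in_Eplus T f -> 0 <= hedging_price T f) &
        (forall f, in_E T f ->
           ((hedging_price T f)%:E <= Ibar T (fun S => (Num.max (f S) 0)%:E))%E)] in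
  (cond1 <-> cond2) /\
  (cond1 ->
     (forall f, in_E T f -> sigmabar T (fun S => (f S)%:E) = (hedging_price T f)%:E) /\
     (forall f, in_Eplus T f -> Ibar T (fun S => (f S)%:E) = (hedging_price T f)%:E)).
Proof.
cbv zeta.
have c12 : (0 <= sigmabar T (fun _ => 0%E))%E ->
    [/\ LOP T,
        (forall f, in_Eplus T f -> 0 <= hedging_price T f) &
        (forall f, in_E T f ->
           ((hedging_price T f)%:E <= Ibar T (fun S => (Num.max (f S) 0)%:E))%E)].
  move=> h1; split.
  - move=> P0 P1 sP0 sP1 eq; apply/le_anti/andP; split; rewrite -lee_fin.
      apply: (price_le h1 sP1 (rep_self T P1) (gen_oneP sP0) (sh_oneP T P0)).
      by move=> S TS; rewrite eq.
    apply: (price_le h1 sP0 (rep_self T P0) (gen_oneP sP1) (sh_oneP T P1)).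
    by move=> S TS; rewrite eq.
  - move=> f [fE fpos]; have [P' [sP' rP' <-]] := hp_spec fE.
    rewrite -lee_fin; apply: le_trans h1 _.
    apply: ereal_inf_lbound; exists (oneP P'); split; first exact: gen_oneP.
    have [sh ->] := sh_oneP T P'; split => // S TS.
    by apply: le_trans (sh S TS); rewrite -(rP' S TS) lee_fin fpos.
  - move=> f fE; have [P' [sP' rP' <-]] := hp_spec fE.
    apply: le_ereal_inf_tmp => V [Ps [[gPs _] shPs]].
    apply: (price_le h1 sP' rP' gPs shPs).
    by move=> S _; rewrite lee_fin le_max lexx.
have c21 : [/\ LOP T,
        (forall f, in_Eplus T f -> 0 <= hedging_price T f) &
        (forall f, in_E T f ->
           ((hedging_price T f)%:E <= Ibar T (fun S => (Num.max (f S) 0)%:E))%E)] ->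
    (0 <= sigmabar T (fun _ => 0%E))%E.
  move=> [hL _ hI]; apply: le_ereal_inf_tmp => V [Ps [gPs [sh ->]]].
  pose A := Ps 0%N.
  have sA : simple_portfolio T A by case: gPs => + _; apply.
  have sN : simple_portfolio T (subP zeroP A) by apply: simple_subP => //; exact: simple_zeroP.
  have fE : in_E T (wealth_inf (subP zeroP A)) by exists (subP zeroP A).
  have := hI _ fE; rewrite (hp_LOP hL sN (fun S _ => erefl)) /=.
  set Y := (\sum_(0 <= m <oo) (pV (Ps m.+1))%:E)%E.
  have Yge0 : (0 <= Y)%E by apply: nneseries_ge0 => n _ _; exact: gen_pV_ge0 gPs n.
  have gPs' : generalized_portfolio T (consP zeroP Ps) by apply: gen_consP => //; exact: simple_zeroP.
  have : (Ibar T (fun S => (Num.max (wealth_inf (subP zeroP A) S) 0)%:E) <= 0%:E + Y)%E.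
    apply: ereal_inf_lbound; exists (consP zeroP Ps); split.
      by split => // j S _; rewrite /= wealth_zeroP.
    split; last by rewrite eseries_head //; exact: gen_pV_ge0 gPs'.
    move=> S TS; rewrite eseries_head //=; last exact: gen_w_ge0 gPs' TS.
    rewrite wealth_inf_subP wealth_inf_zeroP.
    have := sh S TS; rewrite eseries_head //; last exact: gen_w_ge0 gPs TS.
    have : (0 <= \sum_(0 <= m <oo) (wealth_inf (Ps m.+1) S)%:E)%E.
      by apply: nneseries_ge0 => n _ _; exact: gen_w_ge0 gPs TS n.
    case: (\sum_(0 <= m <oo) _)%E => [r| |] //.
      rewrite !addEFin !lee_fin => r0 h; rewrite ge_max; apply/andP; split; lra.
    by move=> _ _; rewrite addey // leey.
  move=> h2 h3; have h4 := le_trans h3 h2; clear h2 h3.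
  rewrite eseries_head //; last exact: gen_pV_ge0 gPs.
  move: h4 Yge0; rewrite -/Y -/A.
  case: Y => [r| |] //.
  by rewrite !addEFin !lee_fin; lra.
split; first by split.
move=> h1; have [hL hpos hI] := c12 h1; split.
- move=> f fE; have [P' [sP' rP' <-]] := hp_spec fE.
  apply/le_anti/andP; split.
    apply: ereal_inf_lbound; exists (oneP P'); split; first exact: gen_oneP.
    have [sh ->] := sh_oneP T P'; split => // S TS.
    by rewrite (rP' S TS); exact: sh.
  apply: le_ereal_inf_tmp => V [Ps [gPs shPs]].
  exact: (price_le h1 sP' rP' gPs shPs).
- move=> f [fE fpos]; have hp0 := hpos f (conj fE fpos).
  have [P' [sP' rP' eP]] := hp_spec fE; rewrite -eP in hp0 *.
  apply/le_anti/andP; split.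
    set Qs := consP zeroP (fun k => match k with 1%N => P' | _ => zeroP end).
    have pP' : positive_portfolio T P' by split => // S TS; rewrite -rP' //; exact: fpos.
    have gQ : generalized_portfolio T Qs.
      split; first by case => [|[|k]] //; exact: simple_zeroP.
      by case => [|[|k]] // _; exact: positive_zeroP.
    have sumQ (F : portfolio R -> R) : F zeroP = 0 -> 0 <= F P' ->
        (\sum_(0 <= m <oo) (F (Qs m))%:E = (F P')%:E)%E.
      move=> F0 F1; rewrite eseries_head //=; last first.
        by case => [|k] /=; rewrite lee_fin ?F0.
      by rewrite F0 add0e; exact: (sum_oneP F P' F0).
    apply: ereal_inf_lbound; exists Qs; split.
      by split => // j S _; rewrite /= wealth_zeroP.
    split; last by rewrite (sumQ (@pV R)).
    move=> S TS; rewrite (sumQ (fun P => wealth_inf P S)) ?wealth_inf_zeroP //.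
      by rewrite (rP' S TS).
    by rewrite -(rP' S TS) fpos.
  apply: le_ereal_inf_tmp => V [Ps [[gPs _] shPs]].
  exact: (price_le h1 sP' rP' gPs shPs).
Qed.
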